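(* Let $k\le l$ be positive integers with $\gcd(k,l)=1$, let $n\ge1$ and $m\ge0$ be integers, and write $m=qn+r$ with integers $q\ge 0$, $0\le r<n$. Then $$U^{k,l}(m,n)\le \max\bigl(nkq,\ nkq+r(k+l)-nl\bigr).$$
   Context: $\mathcal D^{k,l}(m,n)$ denotes the set of all $nk\times nl$ matrices with nonnegative integer entries all of whose row sums equal $ml$ and all of whose column sums equal $mk$. For an $s\times t$ matrix $A=(a_{ij})$ with $s\le t$, a transversal of $A$ is a set of entries $T=\{a_{1i_1},\dots,a_{si_s}\}$ with $i_1,\dots,i_s\in\{1,\dots,t\}$ pairwise distinct, and $|T|=a_{1i_1}+\cdots+a_{si_s}$. Define ${\rm tropdet}(A)=\min_T|T|$ over all transversals $T$ of $A$, and $U^{k,l}(m,n)=\max_{A\in\mathcal D^{k,l}(m,n)}{\rm tropdet}(A)$. *)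

(* Defs.v *)
From mathcomp Require Import all_boot all_order all_algebra.
Set Implicit Arguments. Unset Strict Implicit. Unset Printing Implicit Defensive.

(* A transversal of an s x t matrix (s <= t) is given by an injective map
   sigma : 'I_s -> 'I_t (row i picks column sigma i); its weight is |T|. *)
Definition transversal_weight (s t : nat) (A : 'M[nat]_(s, t))
  (sigma : {ffun 'I_s -> 'I_t}) : nat := \sum_(i < s) A i (sigma i).

(* The neutral element of the
   iterated min is the sum of all entries, which bounds every transversal
   weight from above, so (when s <= t, i.e. transversals exist) this is
   exactly the minimum. *)
Definition tropdet (s t : nat) (A : 'M[nat]_(s, t)) : nat :=
  \big[minn/(\sum_(i < s) \sum_(j < t) A i j)]_(sigma : {ffun 'I_s -> 'I_t} | injectiveb sigma)
     transversal_weight A sigma.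

Definition inD (k l m n : nat) (A : 'M[nat]_(n * k, n * l)) : Prop :=
  (forall i, \sum_(j < n * l) A i j = m * l) /\
  (forall j, \sum_(i < n * k) A i j = m * k).

(* U^{k,l}(m,n) = max over D^{k,l}(m,n) of tropdet.  We express "U <= b" as
   "every A in D has tropdet A <= b" (D is nonempty: the constant-m matrix). *)
Definition U_le (k l m n : nat) (b : int) : Prop :=
  forall A : 'M[nat]_(n * k, n * l), @inD k l m n A -> ((tropdet A)%:Z <= b)%R.

(* Main.v *)
Require Import Defs.
From mathcomp Require Import all_boot all_order all_algebra.
From mathcomp Require Import zify ring.
Set Implicit Arguments. Unset Strict Implicit. Unset Printing Implicit Defensive.

Section Hall.
Variables (R C : finType) (E : R -> C -> bool) (c0 : C).

Definition nbr (B : {set C}) (S : {set R}) : {set C} :=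
  [set j in B | [exists i in S, E i j]].

Lemma nbrU B S T : nbr B (S :|: T) = nbr B S :|: nbr B T.
Proof.
apply/setP=> j; rewrite !inE.
case: (j \in B) => //=.
apply/existsP/orP.
  by case=> i /andP[]; rewrite inE => /orP[] Hi Ej; [left|right];
     apply/existsP; exists i; rewrite Hi.
by case=> /existsP[i /andP[Hi Ej]]; exists i; rewrite inE Hi ?orbT.
Qed.

Lemma nbrD B N S : nbr (B :\: N) S = nbr B S :\: N.
Proof. by apply/setP=> j; rewrite !inE; case: (j \in N); case: (j \in B). Qed.

Lemma nbrD1 B b S : nbr (B :\ b) S = nbr B S :\ b.
Proof. by apply/setP=> j; rewrite !inE; case: (j == b); case: (j \in B). Qed.

Lemma nbr_sub B (S1 S2 : {set R}) : S1 \subset S2 -> nbr B S1 \subset nbr B S2.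
Proof.
move=> H; apply/subsetP=> j; rewrite !inE => /andP[-> /existsP[i /andP[Hi Ej]]].
by apply/existsP; exists i; rewrite Ej (subsetP H).
Qed.

Lemma hall n : forall (A : {set R}) (B : {set C}), #|A| <= n ->
  (forall S : {set R}, S \subset A -> #|S| <= #|nbr B S|) ->
  exists f : R -> C, {in A &, injective f} /\
     (forall i, i \in A -> f i \in B /\ E i (f i)).
Proof.
elim: n => [|n IH] A B.
  rewrite leqn0 => /eqP/cards0_eq -> _.
  by exists (fun _ => c0); split=> [i j|i]; rewrite inE.
move=> cA HA.
case: (boolP [exists S : {set R}, [&& S \subset A, S != set0, S != A &
                                 #|nbr B S| <= #|S|]]).
  case/existsP=> S0 /and4P[sS0 nS0 pS0 tS0].
  set N0 := nbr B S0.
  have pr : S0 \proper A by rewrite properEneq pS0.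
  have c1 : #|S0| <= n by rewrite -ltnS (leq_trans (proper_card pr)).
  have [f1 [inj1 H1]] : exists f : R -> C, {in S0 &, injective f} /\
     (forall i, i \in S0 -> f i \in B /\ E i (f i)).
    apply: (IH S0 B c1) => S sS; apply: HA; exact: subset_trans sS sS0.
  have c2 : #|A :\: S0| <= n.
    rewrite cardsD (setIidPr sS0).
    have : 0 < #|S0| by rewrite card_gt0.
    move: cA; case: #|S0| => // s; case: #|A| => //= a; rewrite subSS.
    by move=> H _; rewrite (leq_trans (leq_subr _ _)).
  have [f2 [inj2 H2]] : exists f : R -> C, {in A :\: S0 &, injective f} /\
     (forall i, i \in A :\: S0 -> f i \in B :\: N0 /\ E i (f i)).
    apply: (IH _ _ c2) => T sT.
    rewrite nbrD.
    have dis : T :&: S0 = set0.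
      apply/setP=> x; rewrite !inE; apply/andP=> -[xT xS].
      by move: (subsetP sT x xT); rewrite inE xS.
    have := HA (T :|: S0); rewrite nbrU.
    have -> : T :|: S0 \subset A.
      rewrite subUset sS0 andbT; apply: subset_trans sT (subsetDl _ _).
    move=> /(_ isT); rewrite cardsU dis cards0 subn0.
    move=> H.
    have e1 : #|nbr B T :|: N0| + #|nbr B T :&: N0| = #|nbr B T| + #|N0|.
      exact: cardsUI.
    have e2 : #|nbr B T :\: N0| = #|nbr B T| - #|nbr B T :&: N0|.
      exact: cardsD.
    have e3 : #|nbr B T :&: N0| <= #|N0|.
      exact: subset_leq_card (subsetIr _ _).
    rewrite e2; move: H e1 e3 tS0; rewrite /N0; lia.
  exists (fun i => if i \in S0 then f1 i else f2 i); split.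
    move=> i j iA jA /=.
    case iS: (i \in S0); case jS: (j \in S0).
    - exact: inj1.
    - have jD : j \in A :\: S0 by rewrite inE jS jA.
      move=> e; have := (H2 j jD).1; rewrite -e inE => /andP[/negP []].
      have [b1 e1] := H1 i iS.
      by rewrite inE b1; apply/existsP; exists i; rewrite iS.
    - have iD : i \in A :\: S0 by rewrite inE iS iA.
      move=> e; have := (H2 i iD).1; rewrite e inE => /andP[/negP []].
      have [b1 e1] := H1 j jS.
      by rewrite inE b1; apply/existsP; exists j; rewrite jS.
    - by apply: inj2; rewrite inE ?iS ?jS.
  move=> i iA; case iS: (i \in S0); first exact: H1.
  have iD : i \in A :\: S0 by rewrite inE iS iA.
  have [+ ->] := H2 i iD; rewrite inE => /andP[_ ->]; done.
rewrite negb_exists => /forallP Hnt.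
case: (set_0Vmem A) => [A0|[a aA]].
  by exists (fun _ => c0); split=> [i j|i]; rewrite A0 inE.
have : 0 < #|nbr B [set a]|.
  by apply: leq_trans (HA _ _); rewrite ?cards1 // sub1set.
rewrite card_gt0 => /set0Pn[b]; rewrite inE => /andP[bB /existsP[a' /andP]].
rewrite inE => -[/eqP -> Eab].
have c2 : #|A :\ a| <= n.
  by move: cA; rewrite (cardsD1 a A) aA.
have [f2 [inj2 H2]] : exists f : R -> C, {in A :\ a &, injective f} /\
     (forall i, i \in A :\ a -> f i \in B :\ b /\ E i (f i)).
  apply: (IH _ _ c2) => T sT.
  rewrite nbrD1.
  case: (set_0Vmem T) => [->|[x xT]]; first by rewrite cards0.
  have := Hnt T.
  have -> : T \subset A by apply: subset_trans sT (subsetDl _ _).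
  have -> : T != set0 by apply/set0Pn; exists x.
  have -> : T != A.
    apply/eqP=> TA; have := subsetP sT a; rewrite TA !inE eqxx aA.
    by move=> /(_ isT).
  rewrite /= -ltnNge => H.
  have := cardsD1 b (nbr B T).
  by case: (b \in nbr B T) => /=; lia.
exists (fun i => if i == a then b else f2 i); split.
  move=> i j iA jA /=.
  case: (eqVneq i a) => [->|ia]; case: (eqVneq j a) => [->|ja] //=.
  - have jD : j \in A :\ a by rewrite !inE ja jA.
    move=> e; have := (H2 j jD).1; by rewrite -e !inE eqxx.
  - have iD : i \in A :\ a by rewrite !inE ia iA.
    move=> e; have := (H2 i iD).1; by rewrite e !inE eqxx.
  - by apply: inj2; rewrite !inE ?ia ?ja.
move=> i iA; case: (eqVneq i a) => [->|ia]; first by split.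
have iD : i \in A :\ a by rewrite !inE ia iA.
by have [+ ->] := H2 i iD; rewrite inE => /andP[_ ->].
Qed.

End Hall.

Import Order.TTheory GRing.Theory Num.Theory.

Lemma sum_const_fin (T : finType) (c : nat) : \sum_(j : T) c = #|T| * c.
Proof. by rewrite sum_nat_const cardE. Qed.

Lemma sum_in_fin (T : finType) (S : {set T}) : \sum_(j : T) (j \in S : nat) = #|S|.
Proof. by rewrite -big_mkcond /= sum1_card. Qed.

Lemma egervary (R C : finType) (c0 : C) : #|R| = #|C| ->
  forall N (a : R -> C -> nat), \sum_i \sum_j a i j < N ->
  exists u : R -> int, exists p : C -> int, exists s : R -> C,
    injective s /\ (forall i j, (u i - p j <= (a i j)%:Z)%R) /\
    (forall i, u i - p (s i) = (a i (s i))%:Z)%R.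
Proof.
move=> cRC; elim=> [|N IH] a Ha //.
set E := fun i j => a i j == 0.
case: (boolP [forall S : {set R}, #|S| <= #|nbr E setT S|]) => [/forallP HH|].
  have [f [injf Hf]] := @hall R C E c0 #|R| setT setT (max_card _)
     (fun S _ => HH S).
  exists (fun _ => 0%R), (fun _ => 0%R), f; split.
    by move=> i j e; apply: injf; rewrite ?inE.
  split=> [i j|i]; first by lia.
  by have [_ /eqP ->] := Hf i (in_setT i); lia.
rewrite negb_forall => /existsP[S]; rewrite -ltnNge => HS.
set Nb := nbr E setT S.
pose a' i j := a i j + (j \in Nb) - (i \in S).
have pt i j : a' i j + (i \in S) = a i j + (j \in Nb).
  rewrite /a' subnK //.
  case iS: (i \in S) => //; case jN: (j \in Nb); rewrite ?addn1 //.
  rewrite addn0 lt0n; apply/negP=> a0.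
  move: jN; rewrite /Nb /nbr !inE => /negbT/negP; apply.
  by apply/existsP; exists i; rewrite iS.
have sum_eq : \sum_i \sum_j a' i j + #|C| * #|S| = \sum_i \sum_j a i j + #|R| * #|Nb|.
  have e1 : \sum_i \sum_j (a' i j + (i \in S)) = \sum_i \sum_j (a i j + (j \in Nb)).
    by apply: eq_bigr => i _; apply: eq_bigr => j _; apply: pt.
  have L : \sum_i \sum_j (a' i j + (i \in S)) = \sum_i \sum_j a' i j + #|C| * #|S|.
    under eq_bigr do rewrite big_split /=.
    rewrite big_split /=; congr (_ + _).
    under eq_bigr do rewrite sum_const_fin.
    by rewrite -big_distrr /= sum_in_fin.
  have RR : \sum_i \sum_j (a i j + (j \in Nb)) = \sum_i \sum_j a i j + #|R| * #|Nb|.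
    under eq_bigr do rewrite big_split /=.
    rewrite big_split /=; congr (_ + _).
    under eq_bigr do rewrite sum_in_fin.
    by rewrite sum_const_fin.
  by rewrite -L -RR.
have lt : \sum_i \sum_j a' i j < \sum_i \sum_j a i j.
  have R0 : 0 < #|C|.
    rewrite -cRC; apply: leq_trans (max_card (mem S)); exact: (leq_ltn_trans (leq0n _) HS).
  have : #|R| * #|Nb| < #|C| * #|S| by rewrite cRC ltn_pmul2l.
  lia.
have [u [p [s [injs [H1 H2]]]]] := IH a' (leq_trans lt Ha).
exists (fun i => u i + ((i \in S) : nat)%:Z)%R,
       (fun j => p j + ((j \in Nb) : nat)%:Z)%R, s.
split=> //; split.
  move=> i j; have := H1 i j; have := pt i j; lia.
move=> i; have := H2 i; have := pt i (s i); lia.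
Qed.

Lemma bigmin_le_seq (I : eqType) (s : seq I) (P : pred I) (F : I -> nat) x i0 :
  i0 \in s -> P i0 -> \big[minn/x]_(i <- s | P i) F i <= F i0.
Proof.
elim: s => //= a s IH; rewrite inE big_cons => /orP[/eqP <- ->|H Pi].
  exact: geq_minl.
case: (P a); last exact: IH.
by apply: leq_trans (geq_minr _ _) (IH H Pi).
Qed.

Lemma bigmin_le (I : finType) (P : pred I) (F : I -> nat) x i0 :
  P i0 -> \big[minn/x]_(i | P i) F i <= F i0.
Proof. by move=> Pi; apply: bigmin_le_seq => //; rewrite mem_index_enum. Qed.

Lemma natz_sum (I : finType) (F : I -> nat) :
  ((\sum_i F i)%N : int) = (\sum_i (F i : int))%R.
Proof. by elim/big_rec2: _ => // i x y _ <-; rewrite PoszD. Qed.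

Lemma exmin (T : finType) (x : T) (f : T -> int) : exists y, forall z, (f y <= f z)%R.
Proof.
case: (@arg_minP _ _ T x predT f isT) => y _ H; exists y => z; exact: H.
Qed.

Lemma exmax (T : finType) (x : T) (f : T -> int) : exists y, forall z, (f z <= f y)%R.
Proof.
case: (@arg_maxP _ _ T x predT f isT) => y _ H; exists y => z; exact: H.
Qed.

Lemma aux1 (x y z P : int) (s t : nat) : (s <= t)%N ->
  (y <= P *+ (t - s))%R -> (x + y - z <= x - P *+ s - (z - P *+ t))%R.
Proof.
move=> st; rewrite -[(P *+ s)%R]mulr_natr -[(P *+ t)%R]mulr_natr -[(P *+ (t - s))%R]mulr_natr natrB // => H.
have -> : (x - P * s%:R - (z - P * t%:R) = x + P * (t%:R - s%:R) - z)%R by ring.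
by rewrite lerD2r lerD2l.
Qed.

Lemma fin_arith (n k l q r : nat) (X Y L : int) : (0 < L)%R ->
  (X <= ((q * n + r) * k)%N%:Z)%R -> (X <= (n * k)%N%:Z * L)%R ->
  ((n * l)%N%:Z * L - ((q * n + r) * l)%N%:Z <= Y)%R -> (0 <= Y)%R ->
  (X - Y <= Num.max ((n * k * q)%N%:Z)
             ((n * k * q)%N%:Z + (r * (k + l))%N%:Z - (n * l)%N%:Z))%R.
Proof.
move=> L0 H1 H2 H3 H4; rewrite le_max.
case: (lerP L q%:Z) => HL.
  have : ((n * k)%N%:Z * L <= (n * k)%N%:Z * q%:Z)%R by rewrite ler_wpM2l.
  move=> H5; apply/orP; left; lia.
have : ((n * l)%N%:Z * (q.+1)%:Z <= (n * l)%N%:Z * L)%R.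
  by rewrite ler_wpM2l //; lia.
move=> H5; apply/orP; right; lia.
Qed.

Theorem theorem5p2 (k l n m q r : nat) :
  0 < k -> k <= l -> coprime k l -> 0 < n ->
  m = q * n + r -> r < n ->
  U_le k l m n
    (Num.max ((n * k * q)%N%:Z)
             ((n * k * q)%N%:Z + (r * (k + l))%N%:Z - (n * l)%N%:Z))%R.
Proof.
move=> k0 kl _ n0 em rn A [Hrow Hcol].
have st : n * k <= n * l by rewrite leq_mul2l kl orbT.
have t0 : 0 < n * l by rewrite muln_gt0 n0 (leq_trans k0 kl).
pose c0 : 'I_(n * l) := Ordinal t0.
pose a (x : 'I_(n * k) + 'I_(n * l - n * k)) (j : 'I_(n * l)) : nat :=
  match x with inl i => A i j | inr _ => 0 end.
have cRC : #|{: 'I_(n * k) + 'I_(n * l - n * k)}| = #|'I_(n * l)|.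
  by rewrite card_sum !card_ord subnKC.
have [u [p [sg [injs [H1 H2]]]]] :=
  egervary c0 cRC (ltnSn (\sum_i \sum_j a i j)).
pose sigma := [ffun i => sg (inl i)].
have inj_sigma : injectiveb sigma.
  by apply/injectiveP => i j; rewrite !ffunE => /injs [].
have le1 : tropdet A <= transversal_weight A sigma.
  rewrite /tropdet; apply: bigmin_le; exact: inj_sigma.
have bij : bijective sg.
  by apply: (inj_card_bij injs); rewrite cRC.
have Wid : ((transversal_weight A sigma : nat) : int) =
   (\sum_r u r - \sum_c p c)%R.
  rewrite /transversal_weight natz_sum.
  rewrite (reindex sg (onW_bij _ bij)) -sumrB.
  rewrite big_sumType /=.
  under [X in (_ = X + _)%R]eq_bigr do rewrite H2 /=.
  under [X in (_ = _ + X)%R]eq_bigr do rewrite H2 /=.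
  rewrite [X in (_ + X)%R]big1 // addr0; apply: eq_bigr => i _; by rewrite ffunE.
have s0 : 0 < n * k by rewrite muln_gt0 n0 k0.
have [j0 Hj0] := exmin c0 p.
have [i0 Hi0] : exists y, forall z, (u z <= u y)%R.
  apply: exmax; exact: (inl (Ordinal s0)).
have F3 d : (u (inr d) <= p j0)%R.
  by have := H1 (inr d) j0; rewrite /= subr_le0.
pose X := (\sum_(i < n * k) (u (inl i) - p j0))%R.
pose Y := (\sum_(c < n * l) (p c - p j0))%R.
have Wle : (((transversal_weight A sigma : nat) : int) <= X - Y)%R.
  rewrite Wid big_sumType /= /X /Y !sumrB !sumr_const !card_ord.
  have : (\sum_(d < n * l - n * k) u (inr d) <= \sum_(d < n * l - n * k) p j0)%R.
    by apply: ler_sum => d _; apply: F3.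
  rewrite sumr_const card_ord; exact: aux1.
have HY0 : (0 <= Y)%R.
  by apply: sumr_ge0 => c _; rewrite subr_ge0.
suff HB : (X - Y <= Num.max ((n * k * q)%N%:Z)
             ((n * k * q)%N%:Z + (r * (k + l))%N%:Z - (n * l)%N%:Z))%R.
  apply: le_trans HB; apply: le_trans Wle; by rewrite lez_nat.
case: (lerP (u i0) (p j0)) => HL.
  have HX : (X <= 0)%R.
    rewrite /X; apply: sumr_le0 => i _; rewrite subr_le0.
    exact: le_trans (Hi0 _) HL.
  rewrite le_max; apply/orP; left.
  move: HX HY0; clear Wle; move: X Y => x y; lia.
case: i0 Hi0 HL => [i1|d] Hi0 HL; last by have := F3 d; rewrite leNgt HL.
apply: (@fin_arith n k l q r X Y (u (inl i1) - p j0)).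
- by rewrite subr_gt0.
- rewrite -em -(Hcol j0) natz_sum; apply: ler_sum => i _.
  exact: H1 (inl i) j0.
- have -> : ((n * k)%N%:Z * (u (inl i1) - p j0) =
             \sum_(i < n * k) (u (inl i1) - p j0))%R.
    by rewrite sumr_const card_ord mulrC -natz mulr_natr.
  by apply: ler_sum => i _; rewrite lerD2r.
- rewrite -em -(Hrow i1) natz_sum.
  have -> : ((n * l)%N%:Z * (u (inl i1) - p j0) =
             \sum_(c < n * l) (u (inl i1) - p j0))%R.
    by rewrite sumr_const card_ord mulrC -natz mulr_natr.
  rewrite -sumrB; apply: ler_sum => c _.
  have := H1 (inl i1) c; rewrite /=; lia.
- exact: HY0.
Qed.
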